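(* Let \(V(G)=O\uplus I\uplus P\) be the Gallai–Edmonds decomposition of a graph \(G\). Then: (1) If \(I\cup P\) is an independent set in \(G\), then \(P=\emptyset\). (2) Let \(v,w\in O\) be two distinct vertices which lie in the same connected component of the induced subgraph \(G[O]\), and let \(G'=G[V(G)\setminus\{v,w\}]\). Then \(MM(G')\leq MM(G)-1\).
   Context: All graphs are finite, undirected and simple; \(MM(G)\) is the size of a maximum matching of \(G\). For \(X\subseteq V(G)\), \(N(X)\) is the set of vertices not in \(X\) adjacent to some vertex of \(X\). The Gallai–Edmonds decomposition of \(G\) is the partition \(V(G)=O\uplus I\uplus P\) where \(O\) is the set of vertices \(v\) such that some maximum matching of \(G\) leaves \(v\) unsaturated (not an end-point of any matching edge), \(I=N(O)\), and \(P=V(G)\setminus(I\cup O)\). *)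

(* Defs.v *)
From mathcomp Require Import all_boot.
Set Implicit Arguments. Unset Strict Implicit. Unset Printing Implicit Defensive.

Section Graphs.
Variable T : finType.
Variable e : rel T.

Definition simple_graph := symmetric e /\ irreflexive e.

(* M is a matching of the induced subgraph G[S]: a set of edges
   (each a 2-element vertex set {x,y} with x,y in S and e x y),
   pairwise disjoint. *)
Definition is_matching (S : {set T}) (M : {set {set T}}) : bool :=
  [forall f in M, exists x, exists y,
     [&& f == [set x; y], x != y, e x y, x \in S & y \in S]] &&
  [forall f in M, forall g in M, (f != g) ==> [disjoint f & g]].

Definition MM (S : {set T}) : nat :=
  \max_(M : {set {set T}} | is_matching S M) #|M|.

Definition is_max_matching (M : {set {set T}}) : bool :=
  is_matching setT M && (#|M| == MM setT).

Definition saturates (M : {set {set T}}) (v : T) : bool :=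
  [exists f in M, v \in f].

Definition GE_O : {set T} :=
  [set v | [exists M, is_max_matching M && ~~ saturates M v]].

Definition nbhd (X : {set T}) : {set T} :=
  [set u | (u \notin X) && [exists x in X, e u x]].

Definition GE_I : {set T} := nbhd GE_O.
Definition GE_P : {set T} := ~: (GE_I :|: GE_O).

Definition independent (X : {set T}) : bool :=
  [forall x in X, forall y in X, ~~ e x y].

Definition induced_rel (X : {set T}) : rel T :=
  fun x y => [&& e x y, x \in X & y \in X].

End Graphs.

(* Main.v *)
Require Import Defs.
From mathcomp Require Import all_boot.
From mathcomp Require Import zify.
Set Implicit Arguments. Unset Strict Implicit. Unset Printing Implicit Defensive.

Section Aux.
Variable T : finType.
Variable e : rel T.
Hypothesis He : simple_graph e.

Lemma esym x y : e x y = e y x. Proof. by case: He => s _; rewrite s. Qed.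
Lemma eirr x : e x x = false. Proof. by case: He => _ i; rewrite i. Qed.

Lemma match_edge S M f t : is_matching e S M -> f \in M -> t \in f ->
  exists s, [/\ f = [set t; s], t != s, e t s, s \in S & t \in S].
Proof.
case/andP => /forallP H _ fM tf.
move/(_ f): H; rewrite fM /= => /existsP [x /existsP [y /and5P [/eqP fxy xy exy xS yS]]].
move: tf; rewrite fxy !inE => /orP [/eqP -> | /eqP ->].
  by exists y; rewrite xy exy xS yS.
exists x; split => //; first by apply/setP => z; rewrite !inE orbC.
- by rewrite eq_sym.
- by rewrite esym.
Qed.

Lemma match_disj S M f g t : is_matching e S M -> f \in M -> g \in M ->
  t \in f -> t \in g -> f = g.
Proof.
case/andP => _ /forallP H fM gM tf tg; apply/eqP; apply: contraT => nfg.
move/(_ f): H; rewrite fM /= => /forallP /(_ g); rewrite gM nfg /= => dis.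
by rewrite (disjointFr dis tf) in tg.
Qed.

Lemma match_sub S M (K : {set {set T}}) : is_matching e S M -> K \subset M -> is_matching e S K.
Proof.
move=> /andP[/forallP H1 /forallP H2] sub; apply/andP; split; apply/forallP => f;
  apply/implyP => fK; have fM := subsetP sub f fK.
- by move/(_ f): H1; rewrite fM.
- apply/forallP => g; apply/implyP => gK.
  by move/(_ f): H2; rewrite fM /= => /forallP /(_ g); rewrite (subsetP sub g gK).
Qed.

Lemma match_T S M : is_matching e S M -> is_matching e setT M.
Proof.
case/andP => /forallP H1 H2; rewrite /is_matching H2 andbT; apply/forallP => f.
apply/implyP => fM; move/(_ f): H1; rewrite fM /= => /existsP [x /existsP [y /and5P [a b c _ _]]].
by apply/existsP; exists x; apply/existsP; exists y; rewrite a b c !in_setT.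
Qed.

Lemma match_add S M a b : is_matching e S M -> a != b -> e a b -> a \in S -> b \in S ->
  (forall g, g \in M -> (a \notin g) && (b \notin g)) -> is_matching e S ([set a; b] |: M).
Proof.
move=> /andP[/forallP H1 /forallP H2] ab eab aS bS Hg.
have dis : forall g, g \in M -> [disjoint [set a; b] & g].
  move=> g gM; rewrite -setI_eq0; apply/eqP/setP => t; rewrite !inE.
  case/andP: (Hg g gM) => ag bg.
  apply/negbTE/negP => /andP [/orP [/eqP -> | /eqP ->]]; by apply/negP.
apply/andP; split; apply/forallP => f; apply/implyP; rewrite in_setU1 => /orP [/eqP -> | fM].
- by apply/existsP; exists a; apply/existsP; exists b; rewrite eqxx ab eab aS bS.
- by move/(_ f): H1; rewrite fM.
- apply/forallP => g; apply/implyP; rewrite in_setU1 => /orP [/eqP -> | gM]; first by rewrite eqxx.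
  by apply/implyP => _; exact: dis.
- apply/forallP => g; apply/implyP; rewrite in_setU1 => /orP [/eqP -> | gM].
    by apply/implyP => _; rewrite disjoint_sym; exact: dis.
  by move/(_ f): H2; rewrite fM /= => /forallP /(_ g); rewrite gM.
Qed.

Lemma match_le S M : is_matching e S M -> #|M| <= MM e S.
Proof. by move=> mM; rewrite /MM; exact: (leq_bigmax_cond (P := is_matching e S)). Qed.

Lemma max_exists S : exists M, is_matching e S M /\ #|M| = MM e S.
Proof.
have m0 : is_matching e S set0 by apply/andP; split; apply/forallP => f; rewrite inE.
case: (@arg_maxnP _ set0 (is_matching e S) (fun M => #|M|) m0) => M HM Hmax.
exists M; split => //; apply/eqP; rewrite eqn_leq match_le //=.
by rewrite /MM; apply/bigmax_leqP => K HK; exact: Hmax.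
Qed.

Lemma sat_in (M : {set {set T}}) (f : {set T}) t : f \in M -> t \in f -> saturates M t.
Proof. by move=> fM tf; apply/exists_inP; exists f. Qed.

Lemma no_aug (M : {set {set T}}) a c : is_matching e setT M -> #|M| = MM e setT ->
  ~~ saturates M a -> ~~ saturates M c -> e a c -> False.
Proof.
move=> mM sz sa sc eac.
have ac : a != c by apply: contraTneq eac => ->; rewrite eirr.
have Hg : forall g, g \in M -> (a \notin g) && (c \notin g).
  by move=> g gM; apply/andP; split; [apply: contra sa|apply: contra sc] => H; exact: sat_in H.
have m' := match_add mM ac eac (in_setT a) (in_setT c) Hg.
have := match_le m'; rewrite cardsU1 -sz.
have -> : [set a; c] \notin M.
  by apply: contra sa => H; apply: (sat_in H); rewrite !inE eqxx.
by rewrite add1n ltnn.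
Qed.


Lemma exchange n : forall (M N : {set {set T}}) x, #|N :\: M| < n ->
  is_matching e setT M -> is_matching e setT N ->
  (forall K, is_matching e setT K -> #|K| <= #|N|) ->
  saturates M x -> ~~ saturates N x ->
  exists z (M' : {set {set T}}), [/\ ~~ saturates M z, is_matching e setT M', #|M'| = #|M|,
    ~~ saturates M' x & (forall t, ~~ saturates M t -> t != z -> ~~ saturates M' t)
    /\ (M :&: N) \subset M'].
Proof.
elim: n => [|n IH] M N x hn mM mN Nmax sMx nsNx; first by rewrite ltn0 in hn.
case/exists_inP: sMx => f fM xf.
have [y [fxy xy exy _ _]] := match_edge mM fM xf.
have sNy : saturates N y.
  apply: contraT => nsNy.
  have Hg : forall g, g \in N -> (x \notin g) && (y \notin g).
    by move=> g gN; apply/andP; split; [apply: contra nsNx|apply: contra nsNy] => H; exact: sat_in H.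
  have m' := match_add mN xy exy (in_setT _) (in_setT _) Hg.
  have := Nmax _ m'; rewrite cardsU1.
  have -> : [set x; y] \notin N.
    by apply: contra nsNx => H; apply: (sat_in H); rewrite !inE eqxx.
  by rewrite add1n ltnn.
case/exists_inP: sNy => g gN yg.
have [u [gyu yu eyu _ _]] := match_edge mN gN yg.
have ux : u != x.
  apply: contra nsNx => /eqP <-; apply: (sat_in gN); by rewrite gyu !inE eqxx orbT.
have xg : x \notin g by apply: contra nsNx => H; exact: sat_in H.
have gM : g \notin M.
  apply/negP => gM; have yf : y \in f by rewrite fxy !inE eqxx orbT.
  have fg := match_disj mM fM gM yf yg.
  by move: xg; rewrite -fg xf.
have fN : f \notin N by apply: contra nsNx => fN; exact: sat_in fN xf.
have yM : forall h, h \in M -> y \in h -> h = f.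
  by move=> h hM yh; apply: (match_disj mM hM fM yh); rewrite fxy !inE eqxx orbT.
have xM : forall h, h \in M -> x \in h -> h = f.
  by move=> h hM yh; exact: (match_disj mM hM fM yh).
case: (boolP (saturates M u)) => [sMu | nsMu].
-
  set N1 := [set x; y] |: (N :\ g).
  have mN1 : is_matching e setT N1.
    apply: match_add (match_sub mN (subD1set N g)) xy exy (in_setT _) (in_setT _) _.
    move=> h; rewrite !inE => /andP [hg hN]; apply/andP; split.
      by apply: contra nsNx => H; exact: sat_in H.
    apply/negP => yh; have := match_disj mN hN gN yh yg; by move/eqP: hg.
  have cardN1 : #|N1| = #|N|.
    rewrite cardsU1 (cardsD1 g N) gN -fxy !inE (negbTE fN) andbF //.
  have N1max : forall K, is_matching e setT K -> #|K| <= #|N1| by rewrite cardN1.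
  have nsN1u : ~~ saturates N1 u.
    apply/negP => /exists_inP [h]; rewrite !inE => /orP [/eqP -> | /andP [hg hN]].
      by rewrite !inE => /orP [/eqP ux'|/eqP uy]; [move: ux; rewrite ux' eqxx | move: yu; rewrite uy eqxx].
    move=> uh; have ug : u \in g by rewrite gyu !inE eqxx orbT.
    by move: hg; rewrite (match_disj mN hN gN uh ug) eqxx.
  have meas : #|N1 :\: M| < n.
    have sub : N1 :\: M \subset (N :\: M) :\ g.
      apply/subsetP => h; rewrite !inE => /andP [hM /orP [/eqP hf | /andP [hg hN]]].
        by move: hM; rewrite hf -fxy fM.
      by rewrite hg hM hN.
    have c1 := cardsD1 g (N :\: M).
    have gin : g \in N :\: M by rewrite inE gN gM.
    rewrite gin /= in c1.
    have c2 := subset_leq_card sub.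
    rewrite c1 add1n ltnS in hn.
    exact: leq_ltn_trans c2 hn.
  have [z [M1 [nsMz mM1 szM1 nsM1u [keep1 sub1]]]] :=
    IH M N1 u meas mM mN1 N1max sMu nsN1u.
  have fM1 : f \in M1 by apply: (subsetP sub1); rewrite !inE fM fxy eqxx.
  have yM1 : forall h, h \in M1 -> y \in h -> h = f.
    by move=> h hM yh; apply: (match_disj mM1 hM fM1 yh); rewrite fxy !inE eqxx orbT.
  have xM1 : forall h, h \in M1 -> x \in h -> h = f.
    by move=> h hM yh; exact: (match_disj mM1 hM fM1 yh).
  set M2 := g |: (M1 :\ f).
  have mM2 : is_matching e setT M2.
    rewrite /M2 gyu.
    apply: match_add (match_sub mM1 (subD1set M1 f)) yu eyu (in_setT _) (in_setT _) _.
    move=> h; rewrite !inE => /andP [hf hM]; apply/andP; split.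
      by apply/negP => yh; move/eqP: hf; apply; exact: yM1.
    by apply: contra nsM1u => H; exact: sat_in H.
  have gM1 : g \notin M1 :\ f.
    rewrite !inE negb_and; apply/orP; right; apply: contra nsM1u => H; apply: (sat_in H).
    by rewrite gyu !inE eqxx orbT.
  exists z, M2; split => //.
  + by rewrite /M2 cardsU1 gM1 -szM1 (cardsD1 f M1) fM1.
  + apply/negP => /exists_inP [h]; rewrite !inE => /orP [/eqP -> | /andP [hf hM]].
      by rewrite (negbTE xg).
    by move=> xh; move/eqP: hf; apply; exact: xM1.
  + split.
    * move=> t nsMt tz; apply/negP => /exists_inP [h]; rewrite !inE => /orP [/eqP -> | /andP [hf hM]].
        rewrite gyu !inE => /orP [/eqP ty | /eqP tu].
          by move: nsMt; rewrite ty (sat_in fM) // fxy !inE eqxx orbT.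
        by move: nsMt; rewrite tu sMu.
      move=> th; have := keep1 t nsMt tz; by rewrite (sat_in hM th).
    * apply/subsetP => h; rewrite !inE => /andP [hM hN].
      have hf : h != f by apply: contraNneq fN => <-.
      rewrite hf /=; apply/orP; right; apply: (subsetP sub1); rewrite !inE hM hN.
      have -> : h != g by apply: contraNneq gM => <-.
      by rewrite orbT.
-
  set M' := g |: (M :\ f).
  have mM' : is_matching e setT M'.
    rewrite /M' gyu.
    apply: match_add (match_sub mM (subD1set M f)) yu eyu (in_setT _) (in_setT _) _.
    move=> h; rewrite !inE => /andP [hf hM]; apply/andP; split.
      by apply/negP => yh; move/eqP: hf; apply; exact: yM.
    by apply: contra nsMu => H; exact: sat_in H.
  have gM' : g \notin M :\ f by rewrite !inE (negbTE gM) andbF.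
  exists u, M'; split => //.
  + by rewrite /M' cardsU1 gM' [in RHS](cardsD1 f M) fM.
  + apply/negP => /exists_inP [h]; rewrite !inE => /orP [/eqP -> | /andP [hf hM]].
      by rewrite (negbTE xg).
    by move=> xh; move/eqP: hf; apply; exact: xM.
  + split.
    * move=> t nsMt tz; apply/negP => /exists_inP [h]; rewrite !inE => /orP [/eqP -> | /andP [hf hM]].
        rewrite gyu !inE => /orP [/eqP ty | /eqP tu].
          by move: nsMt; rewrite ty (sat_in fM) // fxy !inE eqxx orbT.
        by move: tz; rewrite tu eqxx.
      move=> th; by move: nsMt; rewrite (sat_in hM th).
    * apply/subsetP => h; rewrite !inE => /andP [hM hN].
      have hf : h != f by apply: contraNneq fN => <-.
      by rewrite hf hM orbT.
Qed.


Lemma no_two (p : seq T) : forall (M : {set {set T}}) a,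
  is_matching e setT M -> #|M| = MM e setT ->
  path (induced_rel e (GE_O e)) a p -> a != last a p ->
  ~~ saturates M a -> ~~ saturates M (last a p) -> False.
Proof.
elim: p => [|x1 p IH] M a mM szM /=; first by rewrite eqxx.
case/andP => H pth ab nsa nsb.
move: H. rewrite /induced_rel. move=> /and3P [eax1 aO x1O].
case: (boolP (saturates M x1)) => [sx1 | nsx1]; last exact: no_aug mM szM nsa nsx1 eax1.
move: x1O; rewrite /GE_O inE => /existsP [N /andP [/andP [mN /eqP szN] nsNx1]].
have Nmax : forall K, is_matching e setT K -> #|K| <= #|N| by move=> K mK; rewrite szN; exact: match_le mK.
have [z [M' [nsMz mM' szM' nsM'x1 [keep _]]]] :=
  exchange (ltnSn #|N :\: M|) mM mN Nmax sx1 nsNx1.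
have szM'' : #|M'| = MM e setT by rewrite szM'.
case: (eqVneq z a) => [za | zna].
- apply: (IH M' x1 mM' szM'' pth _ nsM'x1).
  + by apply: contraTneq sx1 => ->.
  + by apply: keep => //; rewrite za eq_sym.
- have naz : a != z by rewrite eq_sym.
  exact: no_aug mM' szM'' (keep a nsa naz) nsM'x1 eax1.
Qed.

End Aux.

Theorem corollary2 (T : finType) (e : rel T) (He : simple_graph e) :
  (independent e (GE_I e :|: GE_P e) -> GE_P e = set0) /\
  (forall v w : T, v \in GE_O e -> w \in GE_O e -> v != w ->
     connect (induced_rel e (GE_O e)) v w ->
     MM e (setT :\: [set v; w]) <= MM e setT - 1).
Proof.
split.
- move=> Hind; apply/setP => p; rewrite in_set0; apply/negP => pP.
  have pO : p \notin GE_O e by move: pP; rewrite /GE_P in_setC in_setU negb_or => /andP[_ ->].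
  have pI : p \notin GE_I e by move: pP; rewrite /GE_P in_setC in_setU negb_or => /andP[-> _].
  have [M [mM szM]] := max_exists e setT.
  have sMp : saturates M p.
    move: pO; rewrite /GE_O inE negb_exists => /forallP /(_ M).
    by rewrite /is_max_matching mM szM eqxx /= negbK.
  case/exists_inP: sMp => f fM pf.
  have [q [_ pq epq _ _]] := match_edge He mM fM pf.
  case: (boolP (q \in GE_O e)) => qO.
    by apply: (negP pI); rewrite /GE_I /nbhd inE pO /=; apply/exists_inP; exists q.
  have pU : p \in GE_I e :|: GE_P e by rewrite in_setU pP orbT.
  have qU : q \in GE_I e :|: GE_P e.
    rewrite in_setU; case: (boolP (q \in GE_I e)) => //= qI.
    by rewrite /GE_P in_setC in_setU negb_or qI qO.
  move: Hind => /forallP /(_ p); rewrite pU /= => /forallP /(_ q); rewrite qU /=.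
  by rewrite epq.
- move=> v w vO wO vw /connectP [p pth wl].
  have [M0 [mM0 szM0]] := max_exists e (setT :\: [set v; w]).
  have le := match_le (match_T mM0).
  rewrite -szM0.
  case: (leqP (MM e setT) #|M0|) => H; last by move: H le; clear; lia.
  exfalso.
  have eqM : #|M0| = MM e setT by apply/eqP; rewrite eqn_leq le H.
  have nsat : forall t, t \in [set v; w] -> ~~ saturates M0 t.
    move=> t tvw; apply/negP => /exists_inP [f fM tf].
    have [s [_ _ _ _ tS]] := match_edge He mM0 fM tf.
    by move: tS; rewrite in_setD tvw.
  apply: (@no_two T e He p M0 v (match_T mM0) eqM pth).
  + by rewrite -wl.
  + by apply: nsat; rewrite !inE eqxx.
  + by rewrite -wl; apply: nsat; rewrite !inE eqxx orbT.
Qed.
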